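(* In the setting below, $$N=\lim_{t\to\infty}(S+tP)^{-1}=\frac1\alpha Y-\frac{\ell}{\alpha(\alpha+\ell\gamma)}\,yy^\top.$$
   Context: Let $n\ge3$, $\ell>0$, $\alpha\ge(n-2)\ell$, $S=\alpha I_n+\ell\mathbf{1}_n\mathbf{1}_n^\top$. For a real matrix $P$, $\Delta_i(P)=|P_{ii}|-\sum_{j\ne i}|P_{ij}|$. A signless Laplacian is a real symmetric $n\times n$ matrix $P$ with $P_{ij}\in\{0,1\}$ for $i\ne j$, $P_{ii}\ge0$, and $\Delta_i(P)\in\{0,2\}$ for all $i$; its graph $G$ has vertex set $\{1,\dots,n\}$, an edge $\{i,j\}$ ($i\ne j$) whenever $P_{ij}=1$, and a self-loop $\{i,i\}$ whenever $\Delta_i(P)=2$ (graphs with self-loops are not bipartite). Relabel vertices so that the bipartite components $G_1,\dots,G_r$ come first, each occupying consecutive vertices with one bipartition class (size $p_i$) listed first and then the other (size $q_i$), and the remaining $s=n-\sum_{i=1}^r(p_i+q_i)$ vertices lie in non-bipartite components. Define $\gamma=\sum_{i=1}^r\frac{(p_i-q_i)^2}{p_i+q_i}$, $$y^\top=\Big(\tfrac{p_1-q_1}{p_1+q_1}(\mathbf{1}_{p_1}^\top,-\mathbf{1}_{q_1}^\top),\dots,\tfrac{p_r-q_r}{p_r+q_r}(\mathbf{1}_{p_r}^\top,-\mathbf{1}_{q_r}^\top),\,0\cdot\mathbf{1}_s^\top\Big),$$ and $Y$ the block-diagonal matrix with diagonal blocks $\frac{1}{p_i+q_i}\begin{pmatrix}\mathbf{1}_{p_i}\mathbf{1}_{p_i}^\top&-\mathbf{1}_{p_i}\mathbf{1}_{q_i}^\top\\-\mathbf{1}_{q_i}\mathbf{1}_{p_i}^\top&\mathbf{1}_{q_i}\mathbf{1}_{q_i}^\top\end{pmatrix}$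 for $i=1,\dots,r$, followed by the $s\times s$ zero block. *)

(* Defs.v *)
From HB Require Import structures.
From mathcomp Require Import all_boot all_order all_algebra.
Set Implicit Arguments. Unset Strict Implicit. Unset Printing Implicit Defensive.
Import Order.TTheory GRing.Theory Num.Theory.
Local Open Scope ring_scope.

Section Defs.
Variables (R : realFieldType) (n : nat).

Definition Delta (P : 'M[R]_n) (i : 'I_n) : R :=
  `|P i i| - \sum_(j < n | j != i) `|P i j|.

Definition signless_laplacian (P : 'M[R]_n) : Prop :=
  [/\ P^T = P,
      (forall i j : 'I_n, i != j -> P i j = 0 \/ P i j = 1),
      (forall i : 'I_n, 0 <= P i i) &
      (forall i : 'I_n, Delta P i = 0 \/ Delta P i = 2)].

(* the graph G of P: edges and self-loops *)
Definition gadj (P : 'M[R]_n) : rel 'I_n := fun i j => (i != j) && (P i j == 1).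
Definition gloop (P : 'M[R]_n) (i : 'I_n) : bool := Delta P i == 2.

(* parity double cover: a step along an edge or a self-loop flips the parity bit.
   connect (pcover P) (i,false) (j,b) <-> there is a walk from i to j in G
   (self-loops allowed as steps) whose length has parity b. *)
Definition pcover (P : 'M[R]_n) : rel ('I_n * bool) := fun u v =>
  (v.2 == ~~ u.2) && (gadj P u.1 v.1 || ((u.1 == v.1) && gloop P u.1)).

(* the component of i is bipartite iff it contains no closed walk of odd length
   (a self-loop being an odd closed walk) *)
Definition bip (P : 'M[R]_n) (i : 'I_n) : bool :=
  ~~ connect (pcover P) (i, false) (i, true).

(* sizes of the bipartition class of i and of the other class (meaningful when bip P i) *)
Definition pcl (P : 'M[R]_n) (i : 'I_n) : nat :=
  #|[set j | connect (pcover P) (i, false) (j, false)]|.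
Definition qcl (P : 'M[R]_n) (i : 'I_n) : nat :=
  #|[set j | connect (pcover P) (i, false) (j, true)]|.

Definition gammaP (P : 'M[R]_n) : R :=
  \sum_(i < n | bip P i && (fingraph.root (gadj P) i == i))
     ((pcl P i)%:R - (qcl P i)%:R) ^+ 2 / ((pcl P i)%:R + (qcl P i)%:R).

Definition yvec (P : 'M[R]_n) : 'cV[R]_n :=
  \col_i (if bip P i
          then ((pcl P i)%:R - (qcl P i)%:R) / ((pcl P i)%:R + (qcl P i)%:R)
          else 0).

Definition Ymat (P : 'M[R]_n) : 'M[R]_n :=
  \matrix_(i, j)
    (if bip P i && connect (gadj P) i j
     then (if connect (pcover P) (i, false) (j, false) then 1 else -1)
            / ((pcl P i)%:R + (qcl P i)%:R)
     else 0).

Definition Smat (alpha l : R) : 'M[R]_n := alpha%:M + l *: const_mx 1.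

Definition mx_lim_infty (f : R -> 'M[R]_n) (N : 'M[R]_n) : Prop :=
  forall eps : R, 0 < eps -> exists T : R, forall t : R, T < t ->
    forall i j : 'I_n, `|f t i j - N i j| < eps.

End Defs.

(* Main.v *)
Require Import Defs.
From HB Require Import structures.
From mathcomp Require Import all_boot all_order all_algebra.
From mathcomp Require Import ring lra.
Import Order.TTheory GRing.Theory Num.Theory.
Local Open Scope ring_scope.
Set Implicit Arguments. Unset Strict Implicit. Unset Printing Implicit Defensive.


Lemma conn_ind (T : finType) (e : rel T) (Q : T -> T -> Prop) :
  (forall x, Q x x) -> (forall x y z, Q x y -> e y z -> Q x z) ->
  forall x y, connect e x y -> Q x y.
Proof.
move=> H0 HS x y /connectP [p pth ->].
elim/last_ind: p pth => [|p z IH] //=.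
rewrite rcons_path last_rcons => /andP [pth ez].
exact: HS (IH pth) ez.
Qed.

Section G.
Variables (R : realFieldType) (n : nat) (P : 'M[R]_n).
Hypothesis HP : signless_laplacian P.

Notation pcc := (connect (pcover P)).
Notation conn := (connect (gadj P)).

Lemma Psym i j : P i j = P j i.
Proof. by case: HP => HT _ _ _; rewrite -{1}HT mxE. Qed.

Lemma Poff i j : i != j -> P i j = 0 \/ P i j = 1.
Proof. by case: HP => _ H _ _; apply: H. Qed.

Lemma Pge0 i j : 0 <= P i j.
Proof.
case: HP => _ H1 H2 _; case: (eqVneq i j) => [->|ne]; first exact: H2.
by case: (H1 _ _ ne) => ->.
Qed.

Lemma DeltaE i : Delta P i = P i i - \sum_(j < n | j != i) P i j.
Proof.
rewrite /Delta ger0_norm ?Pge0 //; congr (_ - _).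
by apply: eq_bigr => j _; rewrite ger0_norm ?Pge0.
Qed.

Lemma Delta02 i : Delta P i = 0 \/ Delta P i = 2.
Proof. by case: HP => _ _ _ H; apply: H. Qed.

Lemma Delta_ge0 i : 0 <= Delta P i.
Proof. by case: (Delta02 i) => ->. Qed.

Lemma gadj_sym : symmetric (gadj P).
Proof. by move=> i j; rewrite /gadj eq_sym Psym. Qed.

Lemma pcover_sym : symmetric (pcover P).
Proof.
move=> [a b] [c d]; rewrite /pcover /=; congr andb.
  by case: b; case: d.
rewrite gadj_sym eq_sym; congr orb.
by case: eqP => [->|].
Qed.

Lemma pcc_sym : connect_sym (pcover P).
Proof. exact: sym_connect_sym pcover_sym. Qed.

Lemma conn_sym : connect_sym (gadj P).
Proof. exact: sym_connect_sym gadj_sym. Qed.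

Lemma pcover_flip i b j c : pcover P (i, ~~b) (j, ~~c) = pcover P (i,b) (j,c).
Proof. by rewrite /pcover /=; case: b; case: c. Qed.

Lemma pcc_flip i b j c : pcc (i, ~~b) (j, ~~c) = pcc (i,b) (j,c).
Proof.
have H : forall u v, pcc u v -> pcc (u.1, ~~u.2) (v.1, ~~v.2).
  apply: (@conn_ind _ _ (fun u v => pcc (u.1, ~~u.2) (v.1, ~~v.2))).
    by move=> x; exact: connect0.
  move=> x [y1 y2] [z1 z2] Hxy Hyz; apply: connect_trans Hxy (connect1 _).
  by rewrite /= pcover_flip.
apply/idP/idP => /H /=; rewrite ?negbK //.
Qed.

Lemma pcc_proj u v : pcc u v -> conn u.1 v.1.
Proof.
apply: (@conn_ind _ _ (fun u v => conn u.1 v.1)); first by move=> x; exact: connect0.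
move=> x y z Hxy /andP [_ /orP [g| /andP [/eqP <- _]]] //.
exact: connect_trans Hxy (connect1 g).
Qed.

Lemma conn_lift i j : conn i j -> exists c, pcc (i,false) (j,c).
Proof.
apply: (@conn_ind _ _ (fun i j => exists c, pcc (i,false) (j,c))).
  by move=> x; exists false; exact: connect0.
move=> x y z [c H] g; exists (~~c); apply: connect_trans H (connect1 _).
by rewrite /pcover /= eqxx g.
Qed.

Lemma pcc_shift i j k c b : pcc (i,false) (j,c) ->
  pcc (j,false) (k,b) = pcc (i,false) (k, b (+) c).
Proof.
case: c => H.
  by rewrite addbT -(pcc_flip j false k b) /= (same_connect pcc_sym H).
by rewrite addbF (same_connect pcc_sym H).
Qed.

Lemma bip_parity i j : bip P i -> conn i j ->
  pcc (i,false) (j,true) = ~~ pcc (i,false) (j,false).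
Proof.
move=> Hb Hc; case: (conn_lift Hc) => c Hcc.
case E0: (pcc (i,false) (j,false)); case E1: (pcc (i,false) (j,true)) => //.
- have := pcc_shift i false E0; have := pcc_shift i false E1.
  rewrite /= => ->; move: Hb; rewrite /bip => /negbTE ->.
  by rewrite connect0.
- by case: c Hcc; rewrite ?E0 ?E1.
Qed.

Lemma bip_conn1 i j : conn i j -> bip P i -> bip P j.
Proof.
move=> Hc Hb; case: (conn_lift Hc) => c Hcc.
rewrite /bip (pcc_shift j true Hcc).
have := bip_parity Hb Hc; case: c Hcc => /= Hcc; rewrite Hcc //.
by move=> ->.
Qed.

Lemma bip_conn i j : conn i j -> bip P i = bip P j.
Proof.
move=> Hc; apply/idP/idP; first exact: bip_conn1.
by apply: bip_conn1; rewrite conn_sym.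
Qed.

Definition cc (i : 'I_n) : R := (pcl P i)%:R + (qcl P i)%:R.
Definition dd (i : 'I_n) : R := (pcl P i)%:R - (qcl P i)%:R.
Definition sg (b : bool) : R := if b then 1 else -1.
Definition ss i j := pcc (i,false) (j,false).

Lemma pclqcl i j c : pcc (i,false) (j,c) ->
  pcl P j = (if c then qcl P i else pcl P i) /\
  qcl P j = (if c then pcl P i else qcl P i).
Proof.
move=> H; rewrite /pcl /qcl.
have E b : #|[set k | pcc (j,false) (k,b)]| = #|[set k | pcc (i,false) (k, b (+) c)]|.
  by apply: eq_card => k; rewrite !inE (pcc_shift k b H).
by rewrite !E; case: c {E} H.
Qed.

Lemma cc_eq i j c : pcc (i,false) (j,c) -> cc j = cc i.
Proof. by rewrite /cc => /pclqcl [-> ->]; case: c => //; rewrite addrC. Qed.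

Lemma dd_eq i j c : pcc (i,false) (j,c) -> dd j = (if c then - dd i else dd i).
Proof. by rewrite /dd => /pclqcl [-> ->]; case: c => //; rewrite opprB. Qed.

Lemma cc_conn i j : conn i j -> cc j = cc i.
Proof. by case/conn_lift => c /cc_eq. Qed.

Lemma sg_conn i j : bip P i -> conn i j -> exists2 c, pcc (i,false) (j,c) & sg (ss i j) = (if c then -1 else 1).
Proof.
move=> Hb Hc; case: (conn_lift Hc) => c H; exists c => //.
rewrite /ss /sg; case: c H => H; last by rewrite H.
by move: (bip_parity Hb Hc); rewrite H => /esym /negbTE ->.
Qed.

Lemma dd_sg i j : bip P i -> conn i j -> dd j = sg (ss i j) * dd i.
Proof.
move=> Hb Hc; case: (sg_conn Hb Hc) => c H ->; rewrite (dd_eq H).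
by case: c {H}; rewrite ?mulN1r ?mul1r.
Qed.

Lemma cc_pos i : 0 < cc i.
Proof.
rewrite /cc; have : (0 < pcl P i)%N.
  by rewrite /pcl card_gt0; apply/set0Pn; exists i; rewrite inE connect0.
by case: (pcl P i) => // k _; rewrite -natrD ltr0n addSn.
Qed.

End G.


Section G2.
Variables (R : realFieldType) (n : nat) (P : 'M[R]_n).
Hypothesis HP : signless_laplacian P.

Notation pcc := (connect (pcover P)).
Notation conn := (connect (gadj P)).
Notation cc := (cc P).
Notation dd := (dd P).
Notation ss := (ss P).
Notation sg := (@sg R).

Lemma parity_false i j : bip P i -> conn i j -> pcc (i,false) (j,true) ->
  pcc (i,false) (j,false) = false.
Proof. by move=> Hb Hc H; apply/negbTE; rewrite -(bip_parity HP Hb Hc) H. Qed.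

Lemma card_sum (p : pred 'I_n) : \sum_(j | p j) (1 : R) = #|[set j | p j]|%:R.
Proof.
rewrite (eq_bigl (fun j => j \in [set j | p j])); last by move=> j; rewrite inE.
by rewrite sumr_const.
Qed.

Lemma sum_comp i (F : 'I_n -> R) : bip P i ->
  \sum_(j | conn i j) F j =
  \sum_(j | pcc (i,false) (j,false)) F j + \sum_(j | pcc (i,false) (j,true)) F j.
Proof.
move=> Hb; rewrite (bigID (fun j => pcc (i,false) (j,false))) /=.
congr (_ + _); apply: eq_bigl => j.
  by apply/andb_idl => H; exact: (pcc_proj H).
case Hc: (conn i j) => /=; first by rewrite (bip_parity HP Hb Hc).
apply/esym/negbTE/negP => H; by move: (pcc_proj H); rewrite /= Hc.
Qed.

Lemma sum_sg i : bip P i -> \sum_(j | conn i j) sg (ss i j) = dd i.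
Proof.
move=> Hb; rewrite sum_comp //.
rewrite (eq_bigr (fun=> 1)); last by move=> j H; rewrite /ss H.
rewrite [X in _ + X](eq_bigr (fun=> -1)); last first.
  by move=> j H; rewrite /ss /sg (parity_false Hb (pcc_proj H) H).
by rewrite sumrN !card_sum.
Qed.

Lemma sum_one i : bip P i -> \sum_(j | conn i j) (1:R) = cc i.
Proof. by move=> Hb; rewrite sum_comp // !card_sum. Qed.

Lemma YE j k : Ymat P j k = if bip P j && conn j k then sg (ss j k) / cc j else 0.
Proof. by rewrite mxE. Qed.

Lemma sg_mul j i k : bip P j -> conn j i -> conn j k ->
  sg (ss j i) * sg (ss i k) = sg (ss j k).
Proof.
move=> Hb Hi Hk; case: (conn_lift Hi) => c H.
have -> : ss i k = pcc (j,false) (k,c) by rewrite /ss (pcc_shift HP k false H).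
case: c H => H.
  have -> : ss j i = false by rewrite /ss (parity_false Hb Hi H).
  rewrite (bip_parity HP Hb Hk) /sg /ss.
  by case: (pcc (j,false) (k,false)); rewrite /= ?mulN1r ?opprK ?mulrNN ?mulr1.
by rewrite /ss H /sg mul1r.
Qed.

Lemma Ysym : (Ymat P)^T = Ymat P.
Proof.
apply/matrixP => j k; rewrite mxE !YE (conn_sym HP k j).
case Hc: (conn j k); rewrite ?andbF //=.
rewrite -(bip_conn HP Hc); case: (bip P j) => //=.
by rewrite /ss (pcc_sym HP) (cc_conn HP Hc).
Qed.

Lemma Yidem : Ymat P *m Ymat P = Ymat P.
Proof.
apply/matrixP => j k; rewrite [LHS]mxE.
case Hb: (bip P j); last first.
  by rewrite YE Hb /=; apply: big1 => i _; rewrite YE Hb mul0r.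
rewrite (bigID (fun i => conn j i)) /= [X in _ + X]big1 ?addr0; last first.
  by move=> i /negbTE Hi; rewrite YE Hb Hi mul0r.
rewrite YE Hb /=.
case Hk: (conn j k); last first.
  apply: big1 => i Hi; rewrite (YE i k).
  have -> : conn i k = false by rewrite -(same_connect (conn_sym HP) Hi) Hk.
  by rewrite andbF mulr0.
rewrite (eq_bigr (fun _ => sg (ss j k) / cc j / cc j)); last first.
  move=> i Hi; rewrite YE Hb Hi YE -(bip_conn HP Hi) Hb.
  have -> : conn i k by rewrite -(same_connect (conn_sym HP) Hi).
  rewrite /= (cc_conn HP Hi) -(sg_mul Hb Hi Hk).
  by rewrite mulrAC !mulrA mulrAC.
have cpos := cc_pos P j.
have -> : \sum_(i | conn j i) (sg (ss j k) / cc j / cc j) =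
   (\sum_(i | conn j i) 1) * (sg (ss j k) / cc j / cc j).
  rewrite big_distrl; by apply: eq_bigr => i _; rewrite /= mul1r.
rewrite sum_one //; field; by rewrite gt_eqF.
Qed.

Lemma PY : P *m Ymat P = 0.
Proof.
apply/matrixP => j k; rewrite [LHS]mxE [RHS]mxE.
have Yik i : Ymat P i k = Ymat P k i by rewrite -{1}Ysym mxE.
under eq_bigr => i _ do rewrite Yik.
case Hb: (bip P k); last by apply: big1 => i _; rewrite YE Hb mulr0.
pose w := fun i => if conn k i then sg (ss k i) else 0.
have -> : \sum_i P j i * Ymat P k i = (\sum_i P j i * w i) / cc k.
  rewrite big_distrl; apply: eq_bigr => i _ /=; rewrite YE Hb /w /=.
  by case: (conn k i); rewrite ?mulr0 ?mul0r ?mulrA.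
suff -> : \sum_i P j i * w i = 0 by rewrite mul0r.
rewrite (bigD1 j) //=.
have Pjj : P j j = Delta P j + \sum_(i < n | i != j) P j i by rewrite DeltaE // subrK.
rewrite Pjj mulrDl big_distrl /= -addrA -big_split /=.
rewrite big1 ?addr0.
  rewrite /w; case Hc: (conn k j); last by rewrite mulr0.
  case: (Delta02 HP j) => HD; first by rewrite HD mul0r.
  exfalso; case: (conn_lift Hc) => c H.
  have H2 : pcc (k,false) (j,~~c).
    apply: connect_trans H (connect1 _).
    by rewrite /pcover /= /gloop HD !eqxx /= orbT.
  by move: (bip_parity HP Hb Hc); case: c H H2 => /= -> ->.
move=> i Hij; have Hji : j != i by rewrite eq_sym.
case: (Poff HP Hji) => HPji; first by rewrite HPji !mul0r addr0.
rewrite HPji !mul1r.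
have g : gadj P j i by rewrite /gadj Hji HPji eqxx.
have E : conn k i = conn k j.
  apply/idP/idP => H; last exact: connect_trans H (connect1 g).
  by apply: connect_trans H (connect1 _); rewrite (gadj_sym HP).
rewrite /w E; case Hc: (conn k j); last by rewrite addr0.
have Hci : conn k i by rewrite E.
case: (conn_lift Hc) => c H.
have H2 : pcc (k,false) (i,~~c).
  by apply: connect_trans H (connect1 _); rewrite /pcover /= eqxx g.
case: c H H2 => /= H H2.
  by rewrite /ss (parity_false Hb Hc H) H2 /sg addNr.
by rewrite /ss (parity_false Hb Hci H2) H /sg addrN.
Qed.

Lemma Y1 : Ymat P *m const_mx 1 = yvec P.
Proof.
apply/matrixP => j z; rewrite [LHS]mxE [RHS]mxE.
case Hb: (bip P j); last by apply: big1 => i _; rewrite YE Hb mul0r.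
rewrite (bigID (conn j)) /= [X in _ + X]big1 ?addr0; last first.
  by move=> i /negbTE Hi; rewrite YE Hb Hi mul0r.
rewrite (eq_bigr (fun i => sg (ss j i) / cc j)); last first.
  by move=> i Hi; rewrite YE Hb Hi mxE mulr1.
by rewrite -big_distrl /= sum_sg.
Qed.

Lemma gam : \sum_j yvec P j 0 = gammaP P.
Proof.
rewrite /gammaP big_mkcondl.
rewrite (partition_big (fingraph.root (gadj P)) (fun r => fingraph.root (gadj P) r == r)) /=; last first.
  by move=> j _; rewrite (root_root (conn_sym HP)).
apply: eq_bigr => r /eqP Hr.
rewrite (eq_bigl (fun j => conn r j)); last first.
  by move=> j; rewrite /= -{1}Hr (root_connect (conn_sym HP)) (conn_sym HP).
case Hb: (bip P r); last first.
  by apply: big1 => j Hj; rewrite mxE -(bip_conn HP Hj) Hb.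
rewrite (eq_bigr (fun j => sg (ss r j) * (dd r / cc r))); last first.
  move=> j Hj; rewrite mxE -(bip_conn HP Hj) Hb.
  change (dd j / cc j = sg (ss r j) * (dd r / cc r)).
  by rewrite (dd_sg HP Hb Hj) (cc_conn HP Hj) mulrA.
by rewrite -big_distrl /= sum_sg // mulrA -expr2.
Qed.

End G2.


Section G3.
Variables (R : realFieldType) (n : nat) (P : 'M[R]_n).
Hypothesis HP : signless_laplacian P.

Notation pcc := (connect (pcover P)).
Notation conn := (connect (gadj P)).

Definition Qf (x : 'I_n -> R) := \sum_i \sum_j x i * P i j * x j.

Definition Tq (x : 'I_n -> R) i :=
  Delta P i * x i ^+ 2 + \sum_(j | j != i) 2^-1 * P i j * (x i + x j) ^+ 2.

Lemma Qf_decomp x : Qf x = \sum_i Tq x i.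
Proof.
have E2 : \sum_i \sum_j (2^-1 * P i j * x j ^+ 2) = \sum_i \sum_j (2^-1 * P i j * x i ^+ 2).
  rewrite exchange_big /=; apply: eq_bigr => i0 _; apply: eq_bigr => j0 _ /=.
  by rewrite (Psym HP).
have -> : Qf x = \sum_i \sum_j (2^-1 * P i j * (x i + x j) ^+ 2)
  - \sum_i \sum_j (2^-1 * P i j * x i ^+ 2) - \sum_i \sum_j (2^-1 * P i j * x j ^+ 2).
  rewrite -!sumrB; apply: eq_bigr => i _ /=; rewrite -!sumrB.
  by apply: eq_bigr => j _ /=; field.
rewrite E2 -addrA -opprD -big_split /= -sumrB; apply: eq_bigr => i _.
rewrite /Tq DeltaE //.
have -> : \sum_j (2^-1 * P i j * x i ^+ 2) =
   2^-1 * (P i i + \sum_(j | j != i) P i j) * x i ^+ 2.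
  by rewrite -mulr_suml -mulr_sumr (bigD1 i).
rewrite (bigD1 i) //=.
by field.
Qed.

Lemma Tq_ge0 x i : 0 <= Tq x i.
Proof.
apply: addr_ge0; first by apply: mulr_ge0; [exact: Delta_ge0 | exact: sqr_ge0].
apply: sumr_ge0 => j _; apply: mulr_ge0; last exact: sqr_ge0.
by apply: mulr_ge0; [rewrite invr_ge0 ler0n | exact: Pge0].
Qed.

Lemma Qf_ge0 x : 0 <= Qf x.
Proof. by rewrite Qf_decomp; apply: sumr_ge0 => i _; apply: Tq_ge0. Qed.

Lemma Qf_single x a : Tq x a <= Qf x.
Proof.
rewrite Qf_decomp (bigD1 a) //= lerDl.
by apply: sumr_ge0 => i _; apply: Tq_ge0.
Qed.

Lemma Qf_loop x a : gloop P a -> 2 * x a ^+ 2 <= Qf x.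
Proof.
move=> /eqP HD; apply: le_trans (Qf_single x a); rewrite /Tq HD lerDl.
apply: sumr_ge0 => j _; apply: mulr_ge0; last exact: sqr_ge0.
by apply: mulr_ge0; [rewrite invr_ge0 ler0n | exact: Pge0].
Qed.

Lemma Qf_edge x a b : gadj P a b -> (x a + x b) ^+ 2 <= 2 * Qf x.
Proof.
move=> /andP [ne /eqP Hab].
have : Tq x a <= Qf x by exact: Qf_single.
rewrite /Tq (bigD1 b) 1?eq_sym //= Hab.
have h1 : 0 <= Delta P a * x a ^+ 2 by apply: mulr_ge0; [exact: Delta_ge0 | exact: sqr_ge0].
have h2 : 0 <= \sum_(j | (j != a) && (j != b)) 2^-1 * P a j * (x a + x j) ^+ 2.
  apply: sumr_ge0 => j _; apply: mulr_ge0; last exact: sqr_ge0.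
  by apply: mulr_ge0; [rewrite invr_ge0 ler0n | exact: Pge0].
lra.
Qed.

Definition fw (x : 'I_n -> R) (u : 'I_n * bool) := if u.2 then - x u.1 else x u.1.

Lemma step_bound x u v : pcover P u v -> (fw x v - fw x u) ^+ 2 <= 2 * Qf x.
Proof.
case: u v => a b [c d] /andP [/= /eqP -> H].
have key : (x a + x c) ^+ 2 <= 2 * Qf x.
  case/orP: H => [/Qf_edge //| /andP [/eqP <- /Qf_loop h]].
  have -> : (x a + x a) ^+ 2 = 2 * (2 * x a ^+ 2) by ring.
  by rewrite ler_pM2l ?ltr0n.
have -> : (fw x (c, ~~ b) - fw x (a, b)) ^+ 2 = (x a + x c) ^+ 2.
  by rewrite /fw /=; case: b => /=; ring.
exact: key.
Qed.

Lemma walk x u p : path (pcover P) u p ->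
  (fw x (last u p) - fw x u) ^+ 2 <= 4 ^+ (size p) * (4 * Qf x).
Proof.
have Q0 := Qf_ge0 x.
elim: p u => [|v p IH] u /=.
  by move=> _; rewrite subrr expr0n /= expr0 mul1r; lra.
move=> /andP [e pth]; have := IH v pth; have := step_bound x e.
have c1 : 1 <= (4 : R) ^+ size p by apply: exprn_ege1; lra.
have h5 : Qf x <= 4 ^+ size p * Qf x by rewrite ler_peMl.
rewrite [(4:R) ^+ (size p).+1]exprS.
move: c1 h5 Q0; set c := (4 : R) ^+ size p; set Q := Qf x.
set A := fw x (last v p) - fw x v; set B := fw x v - fw x u.
have -> : fw x (last v p) - fw x u = A + B by rewrite /A /B; ring.
have h4 : 0 <= (A - B) ^+ 2 by exact: sqr_ge0.
have h3 : (A + B) ^+ 2 = 2 * A ^+ 2 + 2 * B ^+ 2 - (A - B) ^+ 2 by ring.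
rewrite h3.
have : 4 * c * (4 * Q) = 2 * (c * (4 * Q)) + 2 * (c * (4 * Q)) by ring.
have : c * (4 * Q) = 4 * (c * Q) by ring.
move=> *; lra.
Qed.

Definition Cw : R := 4 ^+ (2 * n) * 4.

Lemma walk_bound x u v : pcc u v -> (fw x v - fw x u) ^+ 2 <= Cw * Qf x.
Proof.
move=> /connectP [p pth ->]; case: (shortenP pth) => p' pth' upth _.
apply: le_trans (walk x pth') _.
have sz : (size p' <= 2 * n)%N.
  have := max_card (mem (u :: p')).
  move/card_uniqP: upth => ->; rewrite card_prod card_ord card_bool /= mulnC.
  by move=> /ltnW.
have Q0 := Qf_ge0 x.
rewrite /Cw -mulrA ler_wpM2r //; first by apply: mulr_ge0 => //; lra.
by apply: ler_weXn2l => //; lra.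
Qed.

End G3.


Lemma cs (R : realFieldType) (I : finType) (p : pred I) (a : I -> R) :
  (\sum_(i | p i) a i) ^+ 2 <= (\sum_(i | p i) 1) * \sum_(i | p i) a i ^+ 2.
Proof.
have E1 : (\sum_(i | p i) a i) ^+ 2 = \sum_(i | p i) \sum_(k | p k) a i * a k.
  rewrite expr2 big_distrl /=; apply: eq_bigr => i _; by rewrite big_distrr.
have E2 : (\sum_(i | p i) 1) * \sum_(i | p i) a i ^+ 2 =
          \sum_(i | p i) \sum_(k | p k) a k ^+ 2.
  by rewrite big_distrl /=; apply: eq_bigr => i _; rewrite mul1r.
have E3 : (\sum_(i | p i) 1) * \sum_(i | p i) a i ^+ 2 =
          \sum_(i | p i) \sum_(k | p k) a i ^+ 2.
  rewrite mulr_sumr; apply: eq_bigr => i _; by rewrite mulr_suml; apply: eq_bigr => k _; rewrite mul1r.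
have H : \sum_(i | p i) \sum_(k | p k) a i * a k <=
         \sum_(i | p i) \sum_(k | p k) (2^-1 * a i ^+ 2 + 2^-1 * a k ^+ 2).
  apply: ler_sum => i _; apply: ler_sum => k _.
  have : 0 <= (a i - a k) ^+ 2 by exact: sqr_ge0.
  have -> : (a i - a k) ^+ 2 = 2 * (2^-1 * a i ^+ 2 + 2^-1 * a k ^+ 2 - a i * a k) by field.
  by rewrite pmulr_rge0 ?subr_ge0 // ltr0n.
move: H; rewrite E1.
have -> : \sum_(i | p i) \sum_(k | p k) (2^-1 * a i ^+ 2 + 2^-1 * a k ^+ 2) =
  2^-1 * \sum_(i | p i) \sum_(k | p k) a i ^+ 2 + 2^-1 * \sum_(i | p i) \sum_(k | p k) a k ^+ 2.
  rewrite !mulr_sumr -big_split /=; apply: eq_bigr => i _.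
  by rewrite !mulr_sumr -big_split.
rewrite -E2 -E3 => H; apply: le_trans H _; rewrite le_eqVlt; apply/orP; left; apply/eqP.
by field.
Qed.

Section G4.
Variables (R : realFieldType) (n : nat) (P : 'M[R]_n).
Hypothesis HP : signless_laplacian P.

Notation pcc := (connect (pcover P)).
Notation conn := (connect (gadj P)).
Notation Cw := (@Cw R n).
Notation sg := (@sg R).

Lemma Cw_ge0 : 0 <= Cw.
Proof. by rewrite /Cw; apply: mulr_ge0; [apply: exprn_ge0|]; lra. Qed.

Lemma approx (x : 'I_n -> R) j :
  (x j - \sum_i Ymat P j i * x i) ^+ 2 <= Cw * Qf P x.
Proof.
have Q0 := Qf_ge0 HP x; have C0 := Cw_ge0.
case Hb: (bip P j); last first.
  rewrite big1 ?subr0; last by move=> i _; rewrite YE Hb mul0r.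
  have : pcc (j,false) (j,true) by move/negbT: Hb; rewrite /bip negbK.
  move/(walk_bound HP x); rewrite /fw /=.
  have -> : (- x j - x j) ^+ 2 = 4 * x j ^+ 2 by ring.
  have := sqr_ge0 (x j); lra.
have cpos := cc_pos P j.
have -> : x j - \sum_i Ymat P j i * x i =
          (\sum_(i | conn j i) (x j - sg (ss P j i) * x i)) / cc P j.
  rewrite (bigID (conn j)) /= [X in _ - (_ + X)]big1 ?addr0; last first.
    by move=> i /negbTE Hi; rewrite YE Hb Hi mul0r.
  rewrite (eq_bigr (fun i => sg (ss P j i) * x i / cc P j)); last first.
    by move=> i Hi; rewrite YE Hb Hi mulrAC.
  rewrite -big_distrl /= sumrB.
  have -> : \sum_(i | conn j i) x j = (\sum_(i | conn j i) 1) * x j.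
    by rewrite big_distrl; apply: eq_bigr => i _; rewrite /= mul1r.
  rewrite sum_one //; field; by rewrite gt_eqF.
have each : forall i, conn j i -> (x j - sg (ss P j i) * x i) ^+ 2 <= Cw * Qf P x.
  move=> i Hi; case: (sg_conn HP Hb Hi) => c H ->.
  move: (walk_bound HP x H); rewrite /fw /=.
  case: c {H} => /=.
    by have -> : (x j - -1 * x i) ^+ 2 = (- x i - x j) ^+ 2 by ring.
  by have -> : (x j - 1 * x i) ^+ 2 = (x i - x j) ^+ 2 by ring.
have S : \sum_(i | conn j i) (x j - sg (ss P j i) * x i) ^+ 2 <= cc P j * (Cw * Qf P x).
  rewrite -(sum_one HP Hb) big_distrl /=; apply: ler_sum => i Hi.
  by rewrite mul1r; apply: each.
have := cs (fun i => conn j i) (fun i => x j - sg (ss P j i) * x i).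
rewrite (sum_one HP Hb) /= => CS.
rewrite expr_div_n.
set T := \sum_(i | conn j i) (x j - sg (ss P j i) * x i).
rewrite ler_pdivrMr ?exprn_gt0 //.
have : cc P j * \sum_(i | conn j i) (x j - sg (ss P j i) * x i) ^+ 2 <= cc P j * (cc P j * (Cw * Qf P x)).
  by rewrite ler_pM2l.
move: CS; rewrite -/T => CS H.
apply: le_trans CS _; apply: le_trans H _.
by rewrite le_eqVlt; apply/orP; left; apply/eqP; ring.
Qed.

End G4.


Section G5.
Variables (R : realFieldType) (n : nat) (P : 'M[R]_n).
Hypothesis HP : signless_laplacian P.

Notation Cw := (@Cw R n).

Lemma Mmul (alpha l t : R) (X : 'M[R]_n) :
  (Smat n alpha l + t *: P) *m X = alpha *: X + l *: (const_mx 1 *m X) + t *: (P *m X).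
Proof.
by rewrite /Smat !mulmxDl mul_scalar_mx -!scalemxAl.
Qed.

Lemma bound (alpha l t : R) (X E : 'M[R]_n) : 0 < alpha -> 0 <= l -> 0 < t ->
  (Smat n alpha l + t *: P) *m X = E -> Ymat P *m E = 0 ->
  forall i k, X i k ^+ 2 <= (n%:R * Cw * \sum_j E j k ^+ 2) / (alpha * t).
Proof.
move=> ha hl ht HM HY i k.
pose x := fun j => X j k.
pose e := fun j => E j k.
have eE : forall j, e j = alpha * x j + l * (\sum_m x m) + t * \sum_m P j m * x m.
  move=> j; rewrite /e -HM Mmul !mxE; congr (_ + _ + _); congr (_ * _).
  by apply: eq_bigr => m _; rewrite mxE mul1r.
pose a := \sum_j x j * e j.
pose V := \sum_j x j ^+ 2.
pose Q := Qf P x.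
have aE : a = alpha * V + l * (\sum_m x m) ^+ 2 + t * Q.
  rewrite /a /V /Q /Qf (eq_bigr (fun j => alpha * x j ^+ 2 + l * (\sum_m x m) * x j + t * \sum_m x j * P j m * x m)); last first.
    move=> j _; rewrite eE.
    have -> : \sum_m x j * P j m * x m = x j * \sum_m P j m * x m.
      by rewrite mulr_sumr; apply: eq_bigr => m _; rewrite mulrA.
    ring.
  by rewrite !big_split /= -!mulr_sumr expr2 mulrA.
have Q0 : 0 <= Q by apply: Qf_ge0.
have V0 : 0 <= V by apply: sumr_ge0 => j _; apply: sqr_ge0.
have h1 : t * Q <= a.
  rewrite aE; have : 0 <= l * (\sum_m x m) ^+ 2 by apply: mulr_ge0 => //; apply: sqr_ge0.
  have : 0 <= alpha * V by apply: mulr_ge0 => //; lra.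
  lra.
have h5 : alpha * V <= a.
  rewrite aE; have : 0 <= l * (\sum_m x m) ^+ 2 by apply: mulr_ge0 => //; apply: sqr_ge0.
  have : 0 <= t * Q by apply: mulr_ge0 => //; lra.
  lra.
pose r := fun j => x j - \sum_i0 Ymat P j i0 * x i0.
have ar : a = \sum_j r j * e j.
  rewrite /a /r /= [RHS](eq_bigr (fun j => x j * e j - (\sum_i0 Ymat P j i0 * x i0) * e j)); last first.
    by move=> j _; rewrite mulrBl.
  rewrite sumrB.
  suff -> : \sum_j (\sum_i0 Ymat P j i0 * x i0) * e j = 0 by rewrite subr0.
  under eq_bigr => j _ do rewrite mulr_suml.
  rewrite exchange_big /=.
  apply: big1 => i0 _.
  have : (Ymat P *m E) i0 k = 0 by rewrite HY mxE.
  rewrite mxE => H.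
  have Ys : forall a0 b0, Ymat P a0 b0 = Ymat P b0 a0 by move=> a0 b0; rewrite -{1}(Ysym HP) mxE.
  transitivity (x i0 * \sum_j Ymat P i0 j * E j k); last by rewrite H mulr0.
  rewrite mulr_sumr; apply: eq_bigr => j _; rewrite Ys /e /=; ring.
pose K := n%:R * Cw * \sum_j E j k ^+ 2.
have K0 : 0 <= K.
  by apply: mulr_ge0; [apply: mulr_ge0; [exact: ler0n | exact: Cw_ge0] | apply: sumr_ge0 => j _; apply: sqr_ge0].
have h2 : a ^+ 2 <= K * Q.
  rewrite ar; apply: le_trans (cs predT (fun j => r j * e j)) _.
  have -> : \sum_(i0 < n | predT i0) (1 : R) = n%:R.
    by rewrite -[in RHS](card_ord n) -sumr_const.
  have S : \sum_(j | predT j) (r j * e j) ^+ 2 <= \sum_(j | predT j) (Cw * Q) * e j ^+ 2.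
    apply: ler_sum => j _; rewrite exprMn ler_wpM2r ?sqr_ge0 //; exact: approx.
  have E2 : \sum_(j | predT j) (Cw * Q) * e j ^+ 2 = Cw * Q * \sum_j E j k ^+ 2 by rewrite -mulr_sumr.
  rewrite E2 in S.
  apply: le_trans (ler_wpM2l (ler0n _ n) S) _.
  by rewrite /K le_eqVlt; apply/orP; left; apply/eqP; ring.
have h3 : t * a ^+ 2 <= K * a.
  apply: le_trans (_ : t * (K * Q) <= _); first by rewrite ler_wpM2l //; lra.
  rewrite mulrCA ler_wpM2l //.
have h4 : t * a <= K.
  have a0 : 0 <= a by have := mulr_ge0 (ltW ht) Q0; lra.
  case: (ltrP 0 a) => apos; last first.
    have a00 : a = 0 by lra.
    by rewrite a00 mulr0.
  by move: h3; rewrite expr2 mulrA ler_pM2r.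
have xi : x i ^+ 2 <= V.
  rewrite /V (bigD1 i) //= lerDl; apply: sumr_ge0 => j _; apply: sqr_ge0.
rewrite -/(x i) -/K ler_pdivlMr ?mulr_gt0 //.
have : alpha * t * V <= K.
  apply: le_trans h4.
  by rewrite mulrAC [t * a]mulrC; apply: ler_wpM2r => //; lra.
have : alpha * t * x i ^+ 2 <= alpha * t * V by rewrite ler_wpM2l // mulr_ge0 //; lra.
rewrite [x i ^+ 2 * _]mulrC; lra.
Qed.

End G5.


Section G6.
Variables (R : realFieldType) (n : nat) (P : 'M[R]_n).
Hypothesis HP : signless_laplacian P.

Notation u := (const_mx 1 : 'cV[R]_n).
Notation Y := (Ymat P).
Notation y := (yvec P).

Lemma L_uu : (const_mx 1 : 'M[R]_n) = u *m u^T.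
Proof. by apply/matrixP => i j; rewrite !mxE big_ord1 !mxE mulr1. Qed.

Lemma L_uY : u^T *m Y = y^T.
Proof. by rewrite -(Y1 HP) trmx_mul (Ysym HP). Qed.

Lemma L_Yy : Y *m y = y.
Proof. by rewrite -(Y1 HP) mulmxA (Yidem HP). Qed.

Lemma L_uy : u^T *m y = (gammaP P)%:M.
Proof.
apply/matrixP => a b; rewrite !ord1 !mxE eqxx mulr1n -(gam HP).
by apply: eq_bigr => j _; rewrite !mxE mul1r.
Qed.

Lemma PN (c1 c2 : R) : P *m (c1 *: Y - c2 *: (y *m y^T)) = 0.
Proof.
rewrite mulmxBr -!scalemxAr mulmxA -(Y1 HP) mulmxA (PY HP).
by rewrite !mul0mx !scaler0 subrr.
Qed.

Lemma YSN (alpha l : R) : alpha != 0 -> alpha + l * gammaP P != 0 ->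
  Y *m (Smat n alpha l *m (alpha^-1 *: Y
     - (l / (alpha * (alpha + l * gammaP P))) *: (y *m y^T))) = Y.
Proof.
move=> ha hg.
set b := l / (alpha * (alpha + l * gammaP P)).
set W := y *m y^T.
have YS : Y *m Smat n alpha l = alpha *: Y + l *: (y *m u^T).
  by rewrite /Smat mulmxDr mul_mx_scalar -scalemxAr L_uu mulmxA (Y1 HP).
have T1 : (y *m u^T) *m Y = W by rewrite -mulmxA L_uY.
have T2 : (y *m u^T) *m W = gammaP P *: W.
  by rewrite /W mulmxA -(mulmxA y) L_uy mul_mx_scalar scalemxAl.
have T3 : Y *m W = W by rewrite /W mulmxA L_Yy.
rewrite mulmxA YS mulmxDl !mulmxBr -!scalemxAl -!scalemxAr (Yidem HP) T1 T2 T3 !scalerA.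
have -> : l * alpha^-1 = alpha * b + l * (b * gammaP P).
  rewrite /b; field; by rewrite ha hg.
rewrite mulfV // scale1r scalerDl.
set Z1 := (alpha * b) *: W; set Z2 := (l * (b * gammaP P)) *: W.
have -> : (l * b * gammaP P) *: W = Z2 by rewrite /Z2 mulrA.
by rewrite addrK subrK.
Qed.

End G6.

Unset Implicit Arguments.

Theorem proposition4p8 (R : realFieldType) (n : nat) (l alpha : R) (P : 'M[R]_n) :
  (3 <= n)%N -> 0 < l -> (n - 2)%:R * l <= alpha ->
  signless_laplacian P ->
  (exists T : R, forall t : R, T < t -> Smat n alpha l + t *: P \in unitmx) /\
  mx_lim_infty (fun t => invmx (Smat n alpha l + t *: P))
    (alpha^-1 *: Ymat P
     - (l / (alpha * (alpha + l * gammaP P))) *: (yvec P *m (yvec P)^T)).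
Proof.
move=> hn hl hal HP.
have c1 : 1 <= (n - 2)%:R :> R by rewrite ler1n subn_gt0.
have ha : 0 < alpha by nra.
have g0 : 0 <= gammaP P.
  apply: sumr_ge0 => i _; apply: divr_ge0; first exact: sqr_ge0.
  exact: ltW (cc_pos P i).
have hg : alpha + l * gammaP P != 0.
  by rewrite gt_eqF //; have := mulr_ge0 (ltW hl) g0; lra.
have unitM : forall t, 0 < t -> Smat n alpha l + t *: P \in unitmx.
  move=> t ht; rewrite -row_free_unit -kermx_eq0; apply/eqP.
  have MT : (Smat n alpha l + t *: P)^T = Smat n alpha l + t *: P.
    by apply/matrixP => i j; rewrite !mxE eq_sym (Psym HP).
  have H0 : (Smat n alpha l + t *: P) *m (kermx (Smat n alpha l + t *: P))^T = 0.
    by rewrite -{1}MT -trmx_mul mulmx_ker trmx0.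
  have Hb := bound HP ha (ltW hl) ht H0 (mulmx0 _ _).
  apply/matrixP => i j; rewrite [RHS]mxE.
  have := Hb j i; rewrite [X in _ <= X](_ : _ = 0); last first.
    rewrite (eq_bigr (fun _ => 0)); last by move=> k _; rewrite mxE expr0n.
    by rewrite big1 // mulr0 mul0r.
  rewrite mxE => H; apply/eqP; by rewrite -sqrf_eq0 eq_le H sqr_ge0.
split; first by exists 0; move=> t ht; exact: unitM.
move=> eps heps.
pose N := alpha^-1 *: Ymat P
     - (l / (alpha * (alpha + l * gammaP P))) *: (yvec P *m (yvec P)^T).
pose E := 1%:M - Smat n alpha l *m N.
pose K := \sum_k (n%:R * Cw R n * \sum_j E j k ^+ 2).
have Kk : forall k, 0 <= n%:R * Cw R n * \sum_j E j k ^+ 2.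
  move=> k; apply: mulr_ge0; first by apply: mulr_ge0; [exact: ler0n | exact: Cw_ge0].
  by apply: sumr_ge0 => j _; apply: sqr_ge0.
have K0 : 0 <= K by apply: sumr_ge0 => k _.
have ae0 : 0 < alpha * eps ^+ 2 by rewrite mulr_gt0 // exprn_gt0.
exists (K / (alpha * eps ^+ 2)) => t ht i j.
have tpos : 0 < t by apply: le_lt_trans ht; rewrite divr_ge0 // ltW.
have Mu := unitM t tpos.
have HX : (Smat n alpha l + t *: P) *m (invmx (Smat n alpha l + t *: P) - N) = E.
  rewrite mulmxBr mulmxV // /E; congr (_ - _).
  by rewrite mulmxDl -scalemxAl PN // scaler0 addr0.
have HYE : Ymat P *m E = 0.
  by rewrite /E mulmxBr mulmx1 YSN ?subrr // gt_eqF.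
have Hb := bound HP ha (ltW hl) tpos HX HYE i j.
have -> : invmx (Smat n alpha l + t *: P) i j - N i j =
          (invmx (Smat n alpha l + t *: P) - N) i j by rewrite !mxE.
move: Hb; set x := (_ - N) i j => Hb.
have Kj : n%:R * Cw R n * \sum_j0 E j0 j ^+ 2 <= K.
  rewrite /K [X in _ <= X](bigD1 j) //= lerDl; exact: sumr_ge0.
have at0 : 0 < alpha * t by rewrite mulr_gt0.
have x2 : x ^+ 2 < eps ^+ 2.
  apply: le_lt_trans Hb _; apply: le_lt_trans (ler_wpM2r _ Kj) _.
    by rewrite invr_ge0 ltW.
  rewrite ltr_pdivrMr //.
  move: ht; rewrite ltr_pdivrMr // => ht.
  have -> : eps ^+ 2 * (alpha * t) = t * (alpha * eps ^+ 2) by ring.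
  exact: ht.
rewrite ltr_norml; apply/andP; split; nra.
Qed.
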